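(* Let $G$ be a matching covered graph and let $\partial(X)$ be a nontrivial tight cut of $G$. If $G$ is cycle-extendable, then both $\partial(X)$-contractions $G/X$ and $G/\overline{X}$ are also cycle-extendable.
   Context: Graphs are loopless; multiple edges allowed. A graph is matching covered if it is connected, has at least two vertices, and every edge lies in some perfect matching; it is cycle-extendable if moreover for every even cycle $C$ the graph $G-V(C)$ has a perfect matching. For $X\subseteq V(G)$, $\partial(X)$ is the set of edges with exactly one end in $X$, and $\overline X = V(G)\setminus X$; $\partial(X)$ is a tight cut if every perfect matching of $G$ contains exactly one edge of $\partial(X)$, and nontrivial if $|X|\ge2$ and $|\overline X|\ge2$. $G/X$ is obtained from $G$ by shrinking $X$ to a single new vertex (deleting edges with both ends in $X$ and keeping all other edges, possibly creating parallel edges); $G/\overline X$ is defined analogously. *)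

(* Defs.v *)
From mathcomp Require Import all_boot.
Set Implicit Arguments. Unset Strict Implicit. Unset Printing Implicit Defensive.

(* A multigraph: finite vertex type, finite edge type, each edge has two ends.
   Parallel edges are allowed (distinct edges with the same ends). *)
Record mgraph := MGraph {
  vertex : finType;
  edge : finType;
  src : edge -> vertex;
  tgt : edge -> vertex }.

Section Defs.
Variable G : mgraph.

Definition loopless : Prop := forall e : edge G, src e != tgt e.

Definition inc (e : edge G) (v : vertex G) : bool := (src e == v) || (tgt e == v).

Definition joins (e : edge G) (u v : vertex G) : bool :=
  ((src e == u) && (tgt e == v)) || ((src e == v) && (tgt e == u)).

Definition adj (u v : vertex G) : bool := [exists e, joins e u v].

Definition connected : Prop := forall u v : vertex G, connect adj u v.

Definition perfect_matching (M : {set edge G}) : Prop :=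
  forall v : vertex G, #|[set e in M | inc e v]| = 1.

Definition perfect_matching_del (S : {set vertex G}) (M : {set edge G}) : Prop :=
  (forall e, e \in M -> (src e \notin S) && (tgt e \notin S)) /\
  (forall v : vertex G, v \notin S -> #|[set e in M | inc e v]| = 1).

Definition matching_covered : Prop :=
  connected /\ 2 <= #|vertex G| /\
  (forall e : edge G, exists M, perfect_matching M /\ e \in M).

(* An even cycle of length k: k distinct vertices vs 0 .. vs (k-1) and k distinct
   edges, edge es i joining vs i and vs (i+1 mod k); k >= 2 and k even
   (k = 2 is a pair of parallel edges). *)
Definition even_cycle (k : nat) (vs : 'I_k -> vertex G) (es : 'I_k -> edge G) : Prop :=
  [/\ 2 <= k, ~~ odd k, injective vs, injective es &
      forall i : 'I_k, joins (es i) (vs i) (vs (ordS i))].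

Definition cycle_vertices k (vs : 'I_k -> vertex G) : {set vertex G} :=
  [set vs i | i : 'I_k].

Definition cycle_extendable : Prop :=
  matching_covered /\
  forall k (vs : 'I_k -> vertex G) (es : 'I_k -> edge G),
    even_cycle vs es -> exists M, perfect_matching_del (cycle_vertices vs) M.

Definition cut (X : {set vertex G}) : {set edge G} :=
  [set e | (src e \in X) != (tgt e \in X)].

Definition tight_cut (X : {set vertex G}) : Prop :=
  forall M, perfect_matching M -> #|M :&: cut X| = 1.

Definition nontrivial_cut (X : {set vertex G}) : Prop :=
  2 <= #|X| /\ 2 <= #|~: X|.

End Defs.

(* G/X : shrink X to a single new vertex (None); edges with both ends in X are
   deleted, all other edges kept with ends mapped. *)
Section Contract.
Variables (G : mgraph) (X : {set vertex G}).

Definition cvertex : finType := option {v : vertex G | v \notin X}.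
Definition cedge : finType := {e : edge G | ~~ ((src e \in X) && (tgt e \in X))}.
Definition cmap (v : vertex G) : cvertex := insub v.

Definition contract : mgraph :=
  @MGraph cvertex cedge (fun e => cmap (src (val e))) (fun e => cmap (tgt (val e))).
End Contract.

(* Main.v *)
Require Import Defs.
From mathcomp Require Import all_boot zify.
From Stdlib Require Import Classical.
Set Implicit Arguments. Unset Strict Implicit. Unset Printing Implicit Defensive.

Section Basics.
Variable G : mgraph.

Lemma joins_incl (e : edge G) u v : joins e u v -> inc e u.
Proof. by rewrite /joins /inc => /orP [/andP [/eqP -> _]|/andP [_ /eqP ->]]; rewrite eqxx ?orbT. Qed.

Lemma joins_sym (e : edge G) u v : joins e u v = joins e v u.
Proof. by rewrite /joins orbC. Qed.

Lemma joins_incr (e : edge G) u v : joins e u v -> inc e v.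
Proof. by rewrite joins_sym; apply: joins_incl. Qed.

Lemma joins_inc (e : edge G) u v w : joins e u v -> inc e w -> w = u \/ w = v.
Proof.
rewrite /joins /inc => /orP [] /andP [/eqP -> /eqP ->] /orP [] /eqP ->; auto.
Qed.

Lemma joins_ends (e : edge G) u v : joins e u v ->
  (u = src e /\ v = tgt e) \/ (u = tgt e /\ v = src e).
Proof. by rewrite /joins => /orP [] /andP [/eqP -> /eqP ->]; auto. Qed.

Lemma inc_ends (e : edge G) w : inc e w -> w = src e \/ w = tgt e.
Proof. by rewrite /inc => /orP [] /eqP ->; auto. Qed.

Lemma card1_unique (T : finType) (A : {set T}) x y :
  #|A| = 1 -> x \in A -> y \in A -> x = y.
Proof. by move/eqP/cards1P => [z ->]; rewrite !inE => /eqP -> /eqP ->. Qed.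

Lemma alt_pm K (D : 'I_K -> vertex G) (E : 'I_K -> edge G) (M : {set edge G}) :
  even_cycle D E -> perfect_matching_del (cycle_vertices D) M ->
  perfect_matching (M :|: [set E j | j : 'I_K & ~~ odd j]).
Proof.
move=> [k2 evK injD injE jn] [Mav Mcov] v.
have DinS j : D j \in cycle_vertices D by apply: imset_f.
case: (boolP (v \in cycle_vertices D)) => vD; last first.
  rewrite -(Mcov v vD); apply: eq_card => e; rewrite !inE.
  case eM: (e \in M) => //=; apply/negbTE/negP => /andP [/imsetP [j _ ->] ince].
  by case: (joins_inc (jn j) ince) => Hv; move: vD; rewrite Hv DinS.
move/imsetP: vD => [i _ ->].
have lti : i.-1 < K by apply: leq_ltn_trans (leq_pred i) (ltn_ord i).
pose j0 : 'I_K := if odd i then Ordinal lti else i.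
have j0ev : ~~ odd j0.
  by rewrite /j0; case oi: (odd i) => //=; move: oi; case: (nat_of_ord i) => //= n ->.
have incj0 : inc (E j0) (D i).
  rewrite /j0; case oi: (odd i); last exact: joins_incl (jn i).
  have -> : D i = D (ordS (Ordinal lti)).
    congr D; apply: val_inj => /=; move: oi (ltn_ord i); case: (nat_of_ord i) => //= n _ ltn.
    by rewrite modn_small.
  exact: joins_incr (jn _).
suff -> : [set e in M :|: [set E j | j : 'I_K & ~~ odd j] | inc e (D i)] = [set E j0].
  by rewrite cards1.
apply/setP => e; rewrite !inE; apply/idP/eqP; last first.
  by move=> ->; rewrite incj0 andbT; apply/orP; right; apply/imsetP; exists j0; rewrite ?inE.
case/andP => /orP [eM | /imsetP [j jev ->]] ince.
  have := Mav e eM; case: (inc_ends ince) => <-; by rewrite DinS // andbF.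
rewrite inE in jev.
case: (joins_inc (jn j) ince) => /injD Hij.
  rewrite /j0; case: ifP => [oi|_]; last by rewrite Hij.
  by have := congr1 (fun x : 'I_K => odd x) Hij; rewrite /= oi (negbTE jev).
have : val i = j.+1 %% K by rewrite Hij.
case: (ltngtP j.+1 K) => [lt|gt|eq].
- rewrite modn_small // => vi; rewrite /j0; case: ifP => [_|]; last by rewrite vi /= (negbTE jev).
  by congr E; apply: val_inj => /=; rewrite vi.
- by move: gt; rewrite ltnNge ltn_ord.
- move=> _; have /= h := congr1 odd eq.
  by move: evK; rewrite -h negbK (negbTE jev).
Qed.

End Basics.
Section Contr.
Variables (G : mgraph) (X : {set vertex G}).
Local Notation GX := (contract X).
Local Notation sv := {v : vertex G | v \notin X}.

Lemma cmap_none v : (cmap X v == None) = (v \in X).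
Proof.
rewrite /cmap; case: insubP => [u vX _|vX] /=; first by apply/esym/negbTE.
by move: vX; rewrite negbK => ->.
Qed.

Lemma cmap_some v (w : sv) : (cmap X v == Some w) = (v == val w).
Proof.
rewrite /cmap; case: insubP => [u _ <-|].
  by apply/eqP/eqP => [[->]|/val_inj ->].
move=> vX /=; apply/esym/negbTE; apply: contra vX => /eqP ->; exact: (valP w).
Qed.

Lemma cmapK (w : sv) : cmap X (val w) = Some w.
Proof. by apply/eqP; rewrite cmap_some. Qed.

Definition restr (M : {set edge G}) : {set edge GX} := [set e : edge GX | val e \in M].

Lemma card_cedge (B : {set edge G}) :
  (forall e, e \in B -> ~~ ((src e \in X) && (tgt e \in X))) ->
  #|[set e : edge GX | val e \in B]| = #|B|.
Proof.
move=> HB; rewrite -(card_imset _ val_inj); apply: eq_card => e.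
apply/imsetP/idP => [[e' ] |eB]; first by rewrite inE => ? ->.
by exists (Sub e (HB e eB)); rewrite ?inE SubK.
Qed.

Lemma restr_pmd (M : {set edge G}) S (T : {set vertex GX}) :
  perfect_matching_del S M ->
  (forall w : sv, (Some w \in T) = (val w \in S)) ->
  #|M :&: cut X| = (None \notin T) ->
  perfect_matching_del T (restr M).
Proof.
move=> [Mav Mcov] HT Hcut; split.
  move=> e; rewrite inE => eM; have /andP [sS tS] := Mav _ eM.
  have ecut : (src (val e) \in X) || (tgt (val e) \in X) -> val e \in M :&: cut X.
    move=> h; rewrite inE eM inE /=; have := valP e.
    by case/orP: h => ->; case: (_ \in X).
  have end_ok p : p \notin S -> ((p \in X) -> val e \in M :&: cut X) -> cmap X p \notin T.
    move=> pS pX; case cp: (cmap X p) => [w|].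
      by move/eqP: cp; rewrite cmap_some => /eqP pw; rewrite HT -pw.
    apply/negP => NT; move/eqP: cp; rewrite cmap_none => /pX ecM.
    by move: Hcut; rewrite NT => /eqP; rewrite cards_eq0 => /eqP h; rewrite h inE in ecM.
  by rewrite /= !end_ok // => h; apply: ecut; rewrite h ?orbT.
case=> [w|] vT.
  have -> : [set e in restr M | inc e (Some w)] = [set e : edge GX | val e \in [set e in M | inc e (val w)]].
    by apply/setP => e; rewrite !inE /inc /= !cmap_some.
  rewrite card_cedge; first by apply: Mcov; rewrite -HT.
  move=> e; rewrite inE => /andP [_ /orP [] /eqP ->]; by rewrite (negbTE (valP w)) ?andbF.
have -> : [set e in restr M | inc e None] = [set e : edge GX | val e \in M :&: cut X].
  apply/setP => e; rewrite !inE /inc /= !cmap_none; case: (val e \in M) => //=.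
  by have := valP e; case: (src _ \in X); case: (tgt _ \in X).
rewrite card_cedge ?Hcut ?vT // => e; rewrite !inE => /andP [_].
by case: (src _ \in X); case: (tgt _ \in X).
Qed.


Lemma connect_cmap p q : connect (@adj G) p q -> connect (@adj GX) (cmap X p) (cmap X q).
Proof.
move/connectP => [s pth ->]; elim: s p pth => [|y s IH] p /=; first by rewrite connect0.
case/andP => pa pth; apply: connect_trans (IH _ pth).
case/existsP: pa => e je.
case: (boolP ((src e \in X) && (tgt e \in X))) => [/andP [sX tX]|h].
  have -> : cmap X p = None by apply/eqP; rewrite cmap_none; case: (joins_ends je) => [[->]|[->]].
  have -> : cmap X y = None by apply/eqP; rewrite cmap_none; case: (joins_ends je) => [[_ ->]|[_ ->]].
  exact: connect0.
apply: connect1; apply/existsP; exists (Sub e h).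
by case: (joins_ends je) => [[-> ->]|[-> ->]]; rewrite /joins /= !eqxx ?orbT.
Qed.

Lemma cmap_surj (x0 : vertex G) : x0 \in X -> forall u, exists p, cmap X p = u.
Proof.
move=> x0X [w|]; first by exists (val w); rewrite cmapK.
by exists x0; apply/eqP; rewrite cmap_none.
Qed.

Lemma pm_pmd0 (H : mgraph) (M : {set edge H}) : perfect_matching M <-> perfect_matching_del set0 M.
Proof.
split=> [pm|[_ pm] v]; last by apply: pm; rewrite inE.
by split=> [e _|v _]; rewrite ?inE.
Qed.

Lemma contract_mc : matching_covered G -> tight_cut X -> nontrivial_cut X ->
  matching_covered GX.
Proof.
move=> [Gc [G2 Gpm]] tight [X2 cX2]; split; [|split].
- have [x0 x0X] : exists x0, x0 \in X.
    by apply/set0Pn; rewrite -card_gt0; apply: leq_trans X2.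
  move=> u v; have [p <-] := cmap_surj x0X u; have [q <-] := cmap_surj x0X v.
  exact: connect_cmap.
- rewrite /= card_option card_sig; apply: leq_trans cX2 _; apply: leq_trans (leqnSn _).
  by apply: subset_leq_card; apply/subsetP => v; rewrite !inE.
- move=> e; have [M [pM eM]] := Gpm (val e); exists (restr M); split; last by rewrite inE.
  apply/pm_pmd0; apply: (restr_pmd (S := set0)) => [|w|]; first exact/pm_pmd0.
    by rewrite !inE.
  by rewrite tight // inE.
Qed.

End Contr.
Section Partner.
Variables (G : mgraph) (e_def : edge G) (M : {set edge G}).
Hypothesis Gll : loopless G.
Hypothesis pM : perfect_matching M.

Definition pe (v : vertex G) : edge G := odflt e_def [pick e in M | inc e v].
Definition oth (v : vertex G) : vertex G :=
  if src (pe v) == v then tgt (pe v) else src (pe v).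

Lemma pe_spec v : pe v \in M /\ inc (pe v) v.
Proof.
rewrite /pe; case: pickP => [e /andP [] //|h].
have := pM v; have -> : [set e in M | inc e v] = set0.
  by apply/setP => e; rewrite !inE h.
by rewrite cards0.
Qed.

Lemma pe_uniq v e : e \in M -> inc e v -> e = pe v.
Proof.
move=> eM ev; have [pM1 pv] := pe_spec v.
by apply: (card1_unique (pM v)); rewrite inE ?eM ?ev ?pM1 ?pv.
Qed.

Lemma pe_joins v : joins (pe v) v (oth v).
Proof.
have [_] := pe_spec v; rewrite /oth /joins /inc.
by case: eqP => [->|_] /= h; rewrite ?eqxx ?h //= orbT.
Qed.

Lemma oth_neq v : oth v != v.
Proof.
have := Gll (pe v); case: (joins_ends (pe_joins v)) => [[<- <-]|[<- <-]] //.
by rewrite eq_sym.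
Qed.

Lemma pe_oth v : pe (oth v) = pe v.
Proof.
have [pM1 _] := pe_spec v; apply/esym/pe_uniq => //; exact: joins_incr (pe_joins v).
Qed.

Lemma othK v : oth (oth v) = v.
Proof.
have j1 := pe_joins v; have j2 := pe_joins (oth v); rewrite pe_oth in j2.
have /eqP n2 := oth_neq v.
by case: (joins_ends j1) => [[h1 h2]|[h1 h2]]; case: (joins_ends j2) => [[h3 h4]|[h3 h4]];
  congruence.
Qed.

End Partner.

Section Walk.
Variables (G : mgraph) (X : {set vertex G}) (e_def : edge G) (M0 M1 : {set edge G}) (e0 e1 : edge G).
Hypothesis Gll : loopless G.
Hypothesis pM0 : perfect_matching M0.
Hypothesis pM1 : perfect_matching M1.
Hypothesis tight : tight_cut X.
Hypothesis e0M : e0 \in M0.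
Hypothesis e1M : e1 \in M1.
Hypothesis e0c : e0 \in cut X.
Hypothesis e1c : e1 \in cut X.

Definition xend (e : edge G) := if src e \in X then src e else tgt e.

Lemma xend_in e : e \in cut X -> xend e \in X.
Proof. by rewrite /xend inE; case sX: (src e \in X) => //=; case: (tgt e \in X). Qed.

Lemma xend_uniq e v : e \in cut X -> inc e v -> v \in X -> v = xend e.
Proof.
rewrite /xend inE => c /inc_ends [] -> vX; first by rewrite vX.
by move: c; rewrite vX; case: (src e \in X).
Qed.

Lemma cut_joins e v u : joins e v u -> v \in X -> (e \in cut X) = (u \notin X).
Proof. by rewrite inE => /joins_ends [] [-> ->] ->; rewrite // eq_sym. Qed.

Lemma cut_unique M e e' : perfect_matching M -> e \in M -> e \in cut X ->
  e' \in M -> e' \in cut X -> e' = e.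
Proof.
move=> pM eM ec e'M e'c; apply: (card1_unique (tight pM)); by rewrite inE ?e'M ?e'c ?eM ?ec.
Qed.

Definition a := xend e0.
Definition b := xend e1.

Definition step n v := if odd n then oth e_def M0 v else oth e_def M1 v.
Fixpoint w n := if n is n'.+1 then step n' (w n') else a.
Definition we n := if odd n then pe e_def M0 (w n) else pe e_def M1 (w n).

Lemma stepK n v : step n (step n v) = v.
Proof. by rewrite /step; case: (odd n); rewrite ?(othK _ Gll pM0) ?(othK _ Gll pM1). Qed.

Lemma step_neq n v : step n v != v.
Proof. by rewrite /step; case: ifP => _; [apply: (oth_neq _ Gll pM0)|apply: (oth_neq _ Gll pM1)]. Qed.

Lemma step_par n d : step (n + d.*2) = step n.
Proof. by rewrite /step oddD odd_double addbF. Qed.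

Lemma w_joins n : joins (we n) (w n) (w n.+1).
Proof. by rewrite /we /= /step; case: (odd n); [apply: (pe_joins _ pM0)|apply: (pe_joins _ pM1)]. Qed.

Lemma P1 d j : w j != w (j + d.*2.+1).
Proof.
elim: d j => [|d IH] j.
  by rewrite addn1 /= eq_sym step_neq.
apply: contra (IH j.+1) => /eqP h; apply/eqP.
rewrite [w j.+1]/= h addnS /= step_par stepK.
have -> : j + d.+1.*2 = (j + d.*2.+1).+1 by rewrite doubleS !addnS.
by [].
Qed.

Lemma P2 j d : w j = w (j + d.*2) -> w 0 = w (d.*2).
Proof.
elim: j => [|j IH]; first by rewrite add0n.
move=> h; apply: IH.
have E1 : w j = step j (w j.+1) by rewrite /= stepK.
have E2 : w (j + d.*2) = step j (w (j.+1 + d.*2)) by rewrite addSn /= step_par stepK.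
by rewrite E1 E2 h.
Qed.

Lemma pe0a : pe e_def M0 a = e0.
Proof. by apply/esym/pe_uniq => //; rewrite /a /xend /inc; case: ifP; rewrite eqxx ?orbT. Qed.

Lemma a_out : oth e_def M0 a \notin X.
Proof.
have := pe_joins e_def pM0 a; rewrite pe0a => j.
by rewrite -(cut_joins j) // /a xend_in.
Qed.

Lemma noret d : 0 < d -> w (d.*2) = a -> w (d.*2).-1 \notin X.
Proof.
case: d => // d _ h; rewrite doubleS in h *; change (w d.*2.+1 \notin X).
have E1 : w d.*2.+1 = step d.*2.+1 (w d.*2.+2) by rewrite [w d.*2.+2]/= stepK.
by rewrite E1 h /step /= odd_double /=; apply: a_out.
Qed.


Lemma stay n : (forall j, j < n -> ~~ odd j -> w j != b) -> forall j, j <= n -> w j \in X.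
Proof.
move=> Hb; elim=> [|j IH] lej; first by rewrite /= /a xend_in.
have wjX := IH (ltnW lej).
have jw := w_joins j.
apply/negPn/negP => out.
have wec : we j \in cut X by rewrite (cut_joins jw wjX) out.
move: wec; rewrite /we; case oj: (odd j) => wec.
  have [peM peinc] := pe_spec e_def pM0 (w j).
  have pe0 := cut_unique pM0 e0M e0c peM wec.
  rewrite pe0 in peinc; have wa := xend_uniq e0c peinc wjX.
  have := P1 (j./2) 0; rewrite add0n.
  have -> : (j./2).*2.+1 = j by have := odd_double_half j; rewrite oj add1n.
  by rewrite wa eqxx.
have [peM peinc] := pe_spec e_def pM1 (w j).
have pe1 := cut_unique pM1 e1M e1c peM wec.
rewrite pe1 in peinc; have wb := xend_uniq e1c peinc wjX.
by move: (Hb j lej); rewrite oj wb eqxx => /(_ isT).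
Qed.

Lemma exists_b : exists n, ~~ odd n && (w n == b).
Proof.
apply: NNPP => nb.
have allX j : w j \in X.
  apply: (@stay j) => // i _ oi; apply/negP => /eqP wb; apply: nb; exists i; by rewrite oi wb eqxx.
pose N := #|vertex G|.
pose g (t : 'I_N.+1) := w (val t).*2.
suff ginj : injective g by have := leq_card g ginj; rewrite card_ord ltnn.
have key (t t' : 'I_N.+1) : g t = g t' -> t < t' -> False.
  move=> gt lt.
  have h : w (val t).*2 = w ((val t).*2 + (t' - t).*2) by rewrite -doubleD subnKC // ltnW.
  have := noret (d := t' - t); rewrite subn_gt0 lt -(P2 h) => /(_ isT erefl).
  by rewrite allX.
move=> t t' gt; apply: val_inj; case: (ltngtP t t') => [l|l|//]; exfalso.
  exact: key gt l.
exact: key (esym gt) l.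
Qed.

Lemma walk_main : exists n, [/\ ~~ odd n, w n = b, forall j, j <= n -> w j \in X &
  forall j l, j <= n -> l <= n -> w j = w l -> j = l].
Proof.
case: (ex_minnP exists_b) => n /andP [ev /eqP wb] minn.
have Hb : forall j, j < n -> ~~ odd j -> w j != b.
  move=> j jn oj; apply/negP => /eqP wjb; have := minn j; rewrite oj wjb eqxx => /(_ isT).
  by rewrite leqNgt jn.
have inX := stay Hb.
exists n; split=> //.
have key j l : j <= n -> l <= n -> w j = w l -> j < l -> False.
  move=> jn ln wjl lt.
  have := odd_double_half (l - j); move: (odd (l - j)) (odd_double_half (l - j)) => o _.
  set x := (l - j)./2; clearbody x => h.
  case: o h => h.
    have := P1 x j; have -> : j + x.*2.+1 = l by rewrite -!muln2 in h *; lia.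
    by rewrite wjl eqxx.
  have jl : j + x.*2 = l by rewrite -!muln2 in h *; lia.
  rewrite -jl in wjl; have w0 := P2 wjl.
  have x0 : 0 < x by rewrite -!muln2 in h *; lia.
  have := noret x0 (esym w0); rewrite inX //.
  by apply: leq_trans (leq_pred _) _; apply: leq_trans ln; rewrite -jl leq_addl.
move=> j l jn ln wjl; case: (ltngtP j l) => [lt|lt|//]; exfalso.
  exact: key jn ln wjl lt.
exact: key ln jn (esym wjl) lt.
Qed.

End Walk.

Lemma rot_cycle (H : mgraph) k (vs : 'I_k -> vertex H) (es : 'I_k -> edge H) (r : 'I_k) :
  even_cycle vs es -> exists vs' (es' : 'I_k -> edge H), [/\ even_cycle vs' es',
    cycle_vertices vs' = cycle_vertices vs & forall i : 'I_k, val i = 0 -> vs' i = vs r].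
Proof.
move=> [k2 ev injv inje jn].
have k0 : 0 < k by apply: leq_ltn_trans (leq0n r) (ltn_ord r).
pose rotI (j : 'I_k) : 'I_k := Ordinal (ltn_pmod (j + r) k0).
have rinj : injective rotI.
  move=> i j /(congr1 val) /= /eqP; rewrite eqn_modDr !modn_small // => /eqP; exact: val_inj.
have rS j : ordS (rotI j) = rotI (ordS j).
  apply: val_inj => /=; rewrite -addn1 modnDml addn1 modnDml addSn //.
exists (vs \o rotI), (es \o rotI); split.
- apply: And5 => //; [exact: inj_comp injv rinj|exact: inj_comp inje rinj|idtac].
  by move=> i /=; rewrite -rS.
- apply/eqP; rewrite eqEcard; apply/andP; split.
    by apply/subsetP => v /imsetP [i _ ->]; apply: imset_f.
  by rewrite !card_imset //; exact: inj_comp injv rinj.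
- move=> i i0; congr vs; apply: val_inj => /=; rewrite i0 add0n modn_small //.
Qed.

Section Cyc.
Variables (G : mgraph) (X : {set vertex G}).
Hypothesis Gll : loopless G.
Hypothesis tight : tight_cut X.
Hypothesis ceG : cycle_extendable G.
Local Notation GX := (contract X).

Lemma cmap_inj p q : cmap X p = cmap X q -> q \notin X -> p = q.
Proof.
move=> h qX; have := cmapK (Sub q qX : {v | v \notin X}); rewrite SubK -h => /eqP.
by rewrite cmap_some SubK => /eqP.
Qed.

Lemma ends_cut_free k (D : 'I_k -> vertex G) (E : 'I_k -> edge G) j :
  even_cycle D E -> (forall i, D i \notin X) -> E j \notin cut X.
Proof.
move=> [_ _ _ _ jn] DX; rewrite inE.
by case: (joins_ends (jn j)) => [[<- <-]|[<- <-]]; rewrite !(negbTE (DX _)).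
Qed.

Lemma case1 k (vs : 'I_k -> vertex GX) es : even_cycle vs es ->
  None \notin cycle_vertices vs -> exists N, perfect_matching_del (cycle_vertices vs) N.
Proof.
move=> [k2 ev injv inje jn] nN.
have vsS j : exists u, vs j = Some u.
  by case e: (vs j) => [u|]; [exists u | move: nN; rewrite -e imset_f].
pose D j := oapp val (src (val (es j))) (vs j).
have cD j : cmap X (D j) = vs j by case: (vsS j) => u; rewrite /D => -> /=; rewrite cmapK.
have DX j : D j \notin X by case: (vsS j) => u; rewrite /D => -> /=; exact: (valP u).
pose E j := val (es j).
have cyc : even_cycle D E.
  apply: And5 => //.
  - by move=> i j h; apply: injv; rewrite -!cD h.
  - by move=> i j /val_inj; exact: inje.
  - move=> i; have := jn i; rewrite -!cD => /joins_ends [[h1 h2]|[h1 h2]].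
      have e1 := cmap_inj (esym h1) (DX i); have e2 := cmap_inj (esym h2) (DX (ordS i)).
      by rewrite /joins /E e1 e2 !eqxx.
    have e1 := cmap_inj (esym h1) (DX i); have e2 := cmap_inj (esym h2) (DX (ordS i)).
    by rewrite /joins /E e1 e2 !eqxx orbT.
have [M pmdM] := ceG.2 _ _ _ cyc.
have pM' := alt_pm cyc pmdM.
exists (restr X M); apply: restr_pmd pmdM _ _.
  move=> w'; apply/imsetP/imsetP => [[j _ h]|[j _ h]]; exists j => //.
    by apply/esym/eqP; rewrite -cmap_some cD h.
  by rewrite -cD -h cmapK.
rewrite nN /= -(tight pM'); apply: eq_card => e; rewrite !inE.
case: (e \in M) => //=; case: imsetP => //= [[j _ ->]].
by have := ends_cut_free j cyc DX; rewrite inE => /negbTE ->.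
Qed.


Lemma end_eq (e : edge GX) z p : (z = src (val e) \/ z = tgt (val e)) -> cmap X z = cmap X p ->
  (p \notin X) || (p == xend X (val e)) -> z = p.
Proof.
move=> zend czp gp; case: (boolP (p \in X)) => pX; last exact: cmap_inj czp pX.
move: gp; rewrite pX /= => /eqP ->.
have : cmap X z == None by rewrite czp cmap_none.
rewrite cmap_none /xend => zX; have := valP e.
case: zend => zE; rewrite -zE zX //=.
by case: (src _ \in X).
Qed.

Lemma joins_lift (e : edge GX) p q : joins e (cmap X p) (cmap X q) ->
  (p \notin X) || (p == xend X (val e)) -> (q \notin X) || (q == xend X (val e)) ->
  joins (val e) p q.
Proof.
move=> /joins_ends [[h1 h2]|[h1 h2]] gp gq.
  have es := end_eq (or_introl erefl) (esym h1) gp.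
  have et := end_eq (or_intror erefl) (esym h2) gq.
  by rewrite /joins es et !eqxx.
have es := end_eq (or_introl erefl) (esym h2) gq.
have et := end_eq (or_intror erefl) (esym h1) gp.
by rewrite /joins es et !eqxx orbT.
Qed.

Lemma cut_of_none (e : edge GX) : inc e None -> val e \in cut X.
Proof.
rewrite /inc /= !cmap_none inE; have := valP e.
by case: (src _ \in X); case: (tgt _ \in X).
Qed.

Lemma two_joins (e : edge G) p q p' q' : joins e p q -> joins e p' q' ->
  (p = p' /\ q = q') \/ (p = q' /\ q = p').
Proof.
by case/joins_ends => [[-> ->]|[-> ->]] /joins_ends [[-> ->]|[-> ->]]; auto.
Qed.

Lemma ordS_val K (j : 'I_K) : val (ordS j) = if j.+1 == K then 0 else j.+1.
Proof.
rewrite /=; case: eqP => [->|ne]; first by rewrite modnn.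
by rewrite modn_small // ltn_neqAle; apply/andP; split; [apply/eqP|].
Qed.

End Cyc.

Ltac clear_na := repeat match goal with
  | H : ?T |- _ => lazymatch T with
     | is_true (_ <= _) => fail | is_true (_ < _) => fail | @eq _ _ _ => fail
     | not _ => fail | nat => fail | is_true (~~ _) => fail
     | is_true (_ == _) => fail | is_true (_ && _) => fail
     | _ => clear H end end.
Ltac flia := clear_na; lia.

Section Case2.
Variables (G : mgraph) (X : {set vertex G}).
Hypothesis Gll : loopless G.
Hypothesis tight : tight_cut X.
Hypothesis ceG : cycle_extendable G.
Local Notation GX := (contract X).

Lemma case2 k' (vs : 'I_k'.+2 -> vertex GX) es : even_cycle vs es -> vs ord0 = None ->
  exists N, perfect_matching_del (cycle_vertices vs) N.
Proof.
move=> [k2 evk injv inje jn] v0.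
set k := k'.+2.
have v1 : forall i : 'I_k, i != ord0 -> exists u, vs i = Some u.
  move=> i ne; case e: (vs i) => [u|]; first by exists u.
  by move: ne; rewrite -(injv _ _ (etrans e (esym v0))) eqxx.
pose e0 := val (es ord0); pose e1 := val (es ord_max).
have e0c : e0 \in cut X.
  apply: cut_of_none; have := joins_incl (jn ord0); by rewrite v0.
have e1c : e1 \in cut X.
  apply: cut_of_none; have := joins_incr (jn ord_max).
  have -> : ordS (ord_max : 'I_k) = ord0 by apply: val_inj; rewrite /= modnn.
  by rewrite v0.
have [M0 [pM0 e0M]] := ceG.1.2.2 e0.
have [M1 [pM1 e1M]] := ceG.1.2.2 e1.
have [n [evn wnb inX winj]] := walk_main e0 Gll pM0 pM1 tight e0M e1M e0c e1c.
set W := w X e0 M0 M1 e0 in wnb inX winj.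
set b := b X e1 in wnb.
have a_in : W 0 \in X by apply: xend_in.
have b_in : b \in X by apply: xend_in.
have Wjoins s : joins (we X e0 M0 M1 e0 s) (W s) (W s.+1) := w_joins X e0 e0 pM0 pM1 s.
pose u (j : nat) := oapp val (W 0) (vs (inord j)).
have uP j : 0 < j < k -> cmap X (u j) = vs (inord j) /\ u j \notin X.
  case/andP => j0 jk.
  have ne : (inord j : 'I_k) != ord0.
    by apply/eqP => /(congr1 val); rewrite /= inordK //; move=> h; rewrite h in j0.
  have [x ex] := v1 _ ne; rewrite /u ex /= cmapK; split => //; exact: (valP x).
pose K := k + n.
have kK : k <= K by apply: leq_addr.
pose D (j : 'I_K) := if nat_of_ord j == 0 then W 0 else if nat_of_ord j < k then u j else W (K - j).
pose E (j : 'I_K) := if nat_of_ord j < k then val (es (inord j)) else we X e0 M0 M1 e0 (K - j).-1.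
have Du (j : 'I_K) : 0 < j < k -> D j = u j.
  by case/andP => j0 jk; rewrite /D jk; case: eqP => // h; rewrite h in j0.
have Dw (j : 'I_K) : ~~ (0 < j < k) -> exists2 m, m <= n & D j = W m /\ m = (if nat_of_ord j == 0 then 0 else K - j).
  rewrite /D; case: eqP => [->|j0] /= jk; first by exists 0.
  have jk' : ~~ (j < k) by move: jk; rewrite lt0n; move/eqP: j0 => ->.
  rewrite (negbTE jk'); exists (K - j); last by split => //; case: eqP.
  by move: jk'; rewrite -leqNgt /K => h; flia.
have cyc : even_cycle D E.
  apply: And5.
  - exact: leq_trans k2 kK.
  - by rewrite oddD (negbTE evk) (negbTE evn).
  - move=> i j.
    case: (boolP (0 < i < k)) => pi; case: (boolP (0 < j < k)) => pj.
    + rewrite !Du // => h.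
      have : vs (inord i) = vs (inord j) by rewrite -(uP _ pi).1 -(uP _ pj).1 h.
      move/injv/(congr1 val); rewrite /= !inordK; first exact: val_inj.
        by case/andP: pj.
      by case/andP: pi.
    + have [m mn [-> _]] := Dw _ pj; rewrite Du // => h.
      by have := (uP _ pi).2; rewrite h inX.
    + have [m mn [-> _]] := Dw _ pi; rewrite Du // => h.
      by have := (uP _ pj).2; rewrite -h inX.
    + have [m mn [-> m0]] := Dw _ pi; have [m' mn' [-> m0']] := Dw _ pj.
      move/(winj _ _ mn mn') => mm; apply: ord_inj; move: m0 m0' mm => -> ->.
      have := ltn_ord i; have := ltn_ord j; rewrite -/K.
      by case: eqP => ?; case: eqP => ?; flia.
  - have weX s : s < n -> (src (we X e0 M0 M1 e0 s) \in X) && (tgt (we X e0 M0 M1 e0 s) \in X).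
      by move=> sn; case: (joins_ends (Wjoins s)) => [[<- <-]|[<- <-]]; rewrite !inX // ltnW.
    move=> i j; rewrite /E.
    have := ltn_ord i; have := ltn_ord j; rewrite -/K => iK jK.
    case: (ltnP i k) => ik; case: (ltnP j k) => jk.
    + move/val_inj/inje/(congr1 val); rewrite /= !inordK //; exact: ord_inj.
    + move=> h; have := valP (es (inord i)); rewrite /= h weX //; flia.
    + move=> h; have := valP (es (inord j)); rewrite /= -h weX //; flia.
    + move=> h; have j1 := Wjoins ((K - i).-1); rewrite h in j1.
      have j2 := Wjoins ((K - j).-1).
      case: (two_joins j1 j2) => [[h1 _]|[h1 h2]].
        have Hi : (K - i).-1 <= n by flia.
        have Hj : (K - j).-1 <= n by flia.
        by have := winj _ _ Hi Hj h1 => ?; apply: ord_inj; flia.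
      have Hi : (K - i).-1 <= n by flia.
      have Hj : (K - j).-1.+1 <= n by flia.
      have Hi' : (K - i).-1.+1 <= n by flia.
      have Hj' : (K - j).-1 <= n by flia.
      have := winj _ _ Hi Hj h1; have := winj _ _ Hi' Hj' h2; flia.
  - move=> j; have hS := ordS_val j; rewrite /E.
    have jK := ltn_ord j; rewrite -/K in jK hS.
    case: (ltnP j k) => jk.
      pose i : 'I_k := inord j.
      have ival : val i = j by rewrite /= inordK.
      have [h1 g1] : cmap X (D j) = vs i /\ ((D j \notin X) || (D j == xend X (val (es i)))).
        case: (posnP j) => j0.
          have i0 : i = ord0 by apply: val_inj; rewrite ival j0.
          have -> : D j = W 0 by rewrite /D j0.
          rewrite i0 v0; split; first by apply/eqP; rewrite cmap_none.
          by rewrite eqxx orbT.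
        have pj : 0 < j < k by rewrite j0 jk.
        by rewrite Du // (uP _ pj).1 (uP _ pj).2.
      have [h2 g2] : cmap X (D (ordS j)) = vs (ordS i) /\
          ((D (ordS j) \notin X) || (D (ordS j) == xend X (val (es i)))).
        case: (ltnP j.+1 k) => j1.
          have sv : nat_of_ord (ordS j) = j.+1 by rewrite hS; case: eqP => //; flia.
          have pj : 0 < ordS j < k by rewrite sv.
          have -> : ordS i = inord j.+1.
            by apply: val_inj; rewrite /= ival inordK // modn_small.
          by rewrite Du // (uP _ pj).1 -sv (uP _ pj).2.
        have im : i = ord_max by apply: val_inj; rewrite ival /=; flia.
        have -> : ordS i = ord0 by apply: val_inj; rewrite im /= modnn.
        have pj : ~~ (0 < ordS j < k) by rewrite hS; case: eqP => //; flia.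
        have [m mn [-> mv]] := Dw _ pj.
        have -> : m = n by move: mv; rewrite hS; case: (j.+1 =P K) => e /= ->; flia.
        rewrite wnb v0 im; split; first by apply/eqP; rewrite cmap_none.
        by rewrite eqxx orbT.
      by apply: joins_lift; rewrite ?h1 ?h2 //; exact: jn i.
    have pj : ~~ (0 < j < k) by rewrite [j < k]ltnNge jk andbF.
    have pj' : ~~ (0 < ordS j < k) by rewrite hS; case: eqP => //; flia.
    have [m mn [-> mv]] := Dw _ pj.
    have [m' mn' [-> mv']] := Dw _ pj'.
    have -> : m = ((K - j).-1).+1 by move: mv; case: eqP => ? ->; flia.
    have -> : m' = (K - j).-1 by move: mv'; rewrite hS; case: (j.+1 =P K) => e /= ->; flia.
    by rewrite joins_sym; apply: Wjoins.
have [M pmdM] := ceG.2 _ _ _ cyc.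
have pM' := alt_pm cyc pmdM.
pose j0 : 'I_K := Ordinal (leq_trans (ltnW k2) kK).
have Ej0 : E j0 = e0.
  rewrite /E /=; congr val; congr es; apply: val_inj; exact: inordK.
have Dj0 : D j0 = W 0 by [].
have Mcut : #|M :&: cut X| = 0.
  apply/eqP; rewrite cards_eq0; apply/eqP/setP => e; rewrite [in RHS]inE.
  apply/negP => /setIP [eM ec].
  have ee0 : e = e0.
    apply: (card1_unique (tight pM')); rewrite !inE ?eM //= -?Ej0 ?(inE X) //.
      by move: ec; rewrite inE.
    apply/andP; split; last by rewrite Ej0; move: e0c; rewrite inE.
    by apply/orP; right; apply/imsetP; exists j0; rewrite ?inE.
  rewrite ee0 in eM; have := pmdM.1 _ eM.
  have : W 0 \in cycle_vertices D by rewrite -Dj0; apply: imset_f.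
  have : W 0 = src e0 \/ W 0 = tgt e0 by rewrite /W /= /a /xend; case: ifP; auto.
  by case=> ->  ->; rewrite ?andbF.
exists (restr X M); apply: restr_pmd pmdM _ _; last first.
  have -> : None \in cycle_vertices vs by rewrite -v0; apply: imset_f.
  by rewrite Mcut.
move=> w'; apply/imsetP/imsetP => [[i _ h]|[j _ h]].
  have i0 : 0 < i.
    rewrite lt0n; apply/negP => /eqP i0.
    have : i = ord0 by apply: val_inj.
    by move=> ie; rewrite ie v0 in h.
  have pj : 0 < widen_ord kK i < k by rewrite /= i0 ltn_ord.
  exists (widen_ord kK i) => //; rewrite Du //= /u inord_val -h //.
case: (boolP (0 < j < k)) => pj.
  exists (inord j) => //; rewrite -(uP _ pj).1 -Du // -h cmapK //.
have [m mn [Dm _]] := Dw _ pj.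
by have := valP w'; rewrite h Dm inX.
Qed.
End Case2.

Lemma main_lemma (G : mgraph) (X : {set vertex G}) :
  loopless G -> matching_covered G -> tight_cut X -> nontrivial_cut X ->
  cycle_extendable G -> cycle_extendable (contract X).
Proof.
move=> Gll mcG tight ntX ceG; split; first exact: contract_mc.
move=> k vs es cyc.
case: (boolP (None \in cycle_vertices vs)) => hN; last exact: (case1 tight ceG cyc hN).
case: k vs es cyc hN => [|[|k']] vs es cyc hN; try by case: cyc.
case/imsetP: hN => r _ hr.
have [vs' [es' [cyc' eqV v0]]] := rot_cycle r cyc.
rewrite -eqV; apply: (case2 Gll tight ceG cyc'); rewrite v0 //.
Qed.

Lemma cutC (G : mgraph) (X : {set vertex G}) : cut (~: X) = cut X.
Proof. by apply/setP => e; rewrite !inE; case: (src e \in X); case: (tgt e \in X). Qed.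

Theorem lemma2p4 (G : mgraph) (X : {set vertex G}) :
  loopless G -> matching_covered G -> tight_cut X -> nontrivial_cut X ->
  cycle_extendable G ->
  cycle_extendable (contract X) /\ cycle_extendable (contract (~: X)).
Proof.
move=> Gll mcG tight [X2 cX2] ceG; split; first exact: main_lemma.
apply: main_lemma => //.
  by move=> M pM; rewrite cutC; apply: tight.
by split; rewrite ?setCK.
Qed.
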